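(* Consider the multi-resource General Lotto game with the weighted-contribution winning rule $W_{\mathrm{WC}}$ with weights $\boldsymbol a,\boldsymbol b\in\mathbb R^T_{\ge0}$, budgets $\boldsymbol X,\boldsymbol Y\in\mathbb R^T_{\ge0}$ with $\sum_t a_tX_t>0$, and contest values $\boldsymbol v$. Let $\beta=\frac{\sum_{t}b_tY_t}{\sum_t a_tX_t}$. Then the game has an equilibrium, and in every equilibrium the payoff to player $\mathcal X$ is $L(\beta)$ and the payoff to player $\mathcal Y$ is $1-L(\beta)$.
   Context: Contests $\mathcal C=\{1,\dots,C\}$ with values $v_c>0$, $\sum_cv_c=1$; resource types $\mathcal T=\{1,\dots,T\}$. Pure allocations $\mathbf x=(\boldsymbol x_1,\dots,\boldsymbol x_C)\in\mathbb R_{\ge0}^{CT}$, $\boldsymbol x_c=(x_{c,1},\dots,x_{c,T})$, and similarly $\mathbf y$. Strategy set $\mathbb F(\boldsymbol X)$: probability distributions $F$ on $\mathbb R^{CT}_{\ge0}$ with $\mathbb E_{\mathbf x\sim F}[\sum_cx_{c,t}]\le X_t$ for each $t$; similarly $\mathbb F(\boldsymbol Y)$. Winning rule $W_{\mathrm{WC}}(\boldsymbol x,\boldsymbol y)=1$ if $\sum_ta_tx_t\ge\sum_tb_ty_t$, else $0$. Payoffs $\pi_{\mathcal X}(F_{\mathcal X},F_{\mathcal Y})=\mathbb E[\sum_cv_cW_{\mathrm{WC}}(\boldsymbol x_c,\boldsymbol y_c)]$ with $\mathbf x\sim F_{\mathcal X}$, $\mathbf y\sim F_{\mathcal Y}$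 independent, and $\pi_{\mathcal Y}=1-\pi_{\mathcal X}$. Equilibrium: $(F^*_{\mathcal X},F^*_{\mathcal Y})$ with $\pi_{\mathcal X}(F_{\mathcal X},F^*_{\mathcal Y})\le\pi_{\mathcal X}(F^*_{\mathcal X},F^*_{\mathcal Y})\le\pi_{\mathcal X}(F^*_{\mathcal X},F_{\mathcal Y})$ for all admissible $F_{\mathcal X},F_{\mathcal Y}$. $L(\alpha)=1-\alpha/2$ for $\alpha\le1$ and $L(\alpha)=1/(2\alpha)$ for $\alpha>1$. *)

(* Defs.v *)
From HB Require Import structures.
From mathcomp Require Import all_boot all_order all_algebra.
From mathcomp Require Import all_classical all_reals all_analysis.
Set Implicit Arguments. Unset Strict Implicit. Unset Printing Implicit Defensive.
Import Order.TTheory GRing.Theory Num.Theory.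
Local Open Scope classical_set_scope.
Local Open Scope ring_scope.

Section GeneralLotto.
Variables (R : realType) (C T : nat).

(* A pure allocation: for every contest c, a vector of T resource amounts.
   x : C.-tuple (T.-tuple R), x_{c,t} = tnth (tnth x c) t. *)
Definition alloc := C.-tuple (T.-tuple R).

Definition W_WC (a b : 'I_T -> R) (xc yc : T.-tuple R) : R :=
  if \sum_(t < T) b t * tnth yc t <= \sum_(t < T) a t * tnth xc t then 1 else 0.

Definition admissible (X : 'I_T -> R) (F : probability alloc R) : Prop :=
  F [set x : alloc | forall c t, 0 <= tnth (tnth x c) t] = 1%E /\
  forall t : 'I_T,
    (\int[F]_x (\sum_(c < C) tnth (tnth x c) t)%:E <= (X t)%:E)%E.

Definition payoffX (v : 'I_C -> R) (a b : 'I_T -> R)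
  (FX FY : probability alloc R) : \bar R :=
  (\int[product_measure1 FX FY]_z
     (\sum_(c < C) v c * W_WC a b (tnth z.1 c) (tnth z.2 c))%:E)%E.

Definition payoffY (v : 'I_C -> R) (a b : 'I_T -> R)
  (FX FY : probability alloc R) : \bar R := (1 - payoffX v a b FX FY)%E.

Definition equilibrium (v : 'I_C -> R) (a b X Y : 'I_T -> R)
  (FX FY : probability alloc R) : Prop :=
  [/\ admissible X FX, admissible Y FY,
      (forall FX' : probability alloc R, admissible X FX' ->
         (payoffX v a b FX' FY <= payoffX v a b FX FY)%E) &
      (forall FY' : probability alloc R, admissible Y FY' ->
         (payoffX v a b FX FY <= payoffX v a b FX FY')%E)].
End GeneralLotto.

Definition Lpay {R : realType} (alpha : R) : R :=
  if alpha <= 1 then 1 - alpha / 2 else 1 / (2 * alpha).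

(* Main.v *)
Require Import Defs.
From HB Require Import structures.
From mathcomp Require Import all_boot all_order all_algebra.
From mathcomp Require Import all_classical all_reals all_analysis.
From mathcomp Require Import measurable_realfun.
From mathcomp Require Import ring lra.
Import Order.TTheory GRing.Theory Num.Theory.
Local Open Scope classical_set_scope.
Local Open Scope ring_scope.

Section U.
Context (R : realType).

Lemma U_cc (l t : R) (hl : (l < 1)%R) : (l <= t)%R -> (t <= 1)%R ->
  uniform_prob hl `[t, 1] = ((1 - t) / (1 - l))%:E.
Proof.
move=> lt t1.
rewrite /uniform_prob integral_uniform_pdf.
have -> : `[t, 1] `&` `[l, 1] = `[t, 1]%classic.
  apply/setIidl => x /=; rewrite !in_itv /= => /andP[tx ->].
  by rewrite (le_trans lt tx).
rewrite (eq_integral (fun=> (1 - l)^-1%:E)); last first.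
  move=> x; rewrite inE /= in_itv /= => /andP[tx x1].
  by rewrite /uniform_pdf (le_trans lt tx) x1.
rewrite integral_cst//= lebesgue_measure_itv/= lte_fin.
move: t1; rewrite le_eqVlt => /predU1P[->|t1]; first by rewrite ltxx subrr mul0r mule0.
by rewrite t1 -EFinD -EFinM mulrC.
Qed.

Lemma U_oc (l t : R) (hl : (l < 1)%R) : (l <= t)%R -> (t <= 1)%R ->
  uniform_prob hl `]t, 1] = ((1 - t) / (1 - l))%:E.
Proof.
move=> lt t1.
rewrite /uniform_prob integral_uniform_pdf.
have -> : `]t, 1] `&` `[l, 1] = `]t, 1]%classic.
  apply/setIidl => x /=; rewrite !in_itv /= => /andP[tx ->].
  by rewrite (le_trans lt (ltW tx)).
rewrite (eq_integral (fun=> (1 - l)^-1%:E)); last first.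
  move=> x; rewrite inE /= in_itv /= => /andP[tx x1].
  by rewrite /uniform_pdf (le_trans lt (ltW tx)) x1.
rewrite integral_cst//= lebesgue_measure_itv/= lte_fin.
move: t1; rewrite le_eqVlt => /predU1P[->|t1]; first by rewrite ltxx subrr mul0r mule0.
by rewrite t1 -EFinD -EFinM mulrC.
Qed.

Lemma U_maxr (l : R) (hl : (l < 1)%R) : (l <= 0)%R ->
  (\int[uniform_prob hl]_u (Num.max u 0)%:E)%E = ((1 - l)^-1 / 2)%:E.
Proof.
move=> l0.
rewrite integral_uniform //; last 2 first.
- apply/measurable_EFinP; exact: measurable_maxr.
- by move=> x; rewrite lee_fin le_max lexx orbT.
rewrite integral_mkcond.
have -> : (\int[lebesgue_measure]_x (((fun u : R => (Num.max u 0)%:E) \_ `[l, 1%R]) x))%E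
    = (beta_fun 2 1)%:E.
  rewrite EFin_beta_fun; apply: eq_integral => x _.
  rewrite !patchE !mem_setE /= !in_itv /=.
  case: (boolP (l <= x <= 1)) => [/andP[lx x1]|nlx];
    case: (boolP (0 <= x <= 1)) => [/andP[x0 x1']|nx].
  - by rewrite /XMonemX expr1 expr0 mulr1 (max_idPl x0).
  - move: nx; rewrite x1 andbT -ltNge => x0.
    by rewrite (max_idPr (ltW x0)).
  - by move: nlx; rewrite x1' (le_trans l0 x0).
  - by [].
by rewrite beta_fun_sym beta_fun1Sn -EFinM.
Qed.


Lemma measurable_ifle (f g : measurableTypeR R -> R) :
  measurable_fun setT f -> measurable_fun setT g ->
  measurable_fun setT (fun u => (if f u <= g u then 1 else 0 : R)%:E).
Proof.
move=> mf mg; apply/measurable_EFinP.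
by apply: measurable_fun_ifT => //; exact: measurable_fun_ler.
Qed.

Lemma U_lower (l : R) (hl : l < 1) (l0 : l <= 0) (k s : R) (k0 : 0 < k) :
  (((1 - Num.max s 0 / k) / (1 - l))%:E <=
  \int[uniform_prob hl]_u (if s <= k * Num.max u 0 then 1 else 0 : R)%:E)%E.
Proof.
set t := Num.max s 0 / k.
have t0 : 0 <= t by rewrite divr_ge0 ?le_max ?lexx ?orbT // ltW.
have l1 : 0 < 1 - l by rewrite subr_gt0.
have [t1|t1] := leP t 1; last first.
  apply: (@le_trans _ _ 0%E); last by apply: integral_ge0 => x _; case: ifP.
  by rewrite lee_fin pmulr_lle0 ?invr_gt0 // subr_le0 ltW.
rewrite -(@U_cc l t hl (le_trans l0 t0) t1).
have -> : uniform_prob hl `[t, 1] = (\int[uniform_prob hl]_u (\1_(`[t, 1%R]) u)%:E)%E.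
  by rewrite integral_indic //= setIT.
apply: ge0_le_integral => //.
- by apply/measurable_EFinP; exact: measurable_indic.
- apply: measurable_ifle => //.
  by apply: measurable_funM => //; exact: measurable_maxr.
move=> u _; rewrite indicE.
case: (boolP (u \in `[t, 1%R]%classic)) => [|_]; last by rewrite lee_fin; case: ifP.
rewrite mem_setE /= in_itv /= => /andP[tu u1].
have u0 : 0 <= u by exact: le_trans tu.
rewrite (max_idPl u0).
suff -> : s <= k * u by [].
apply: (@le_trans _ _ (Num.max s 0)); first by rewrite le_max lexx.
have := ler_wpM2l (ltW k0) tu.
by rewrite /t mulrCA mulfV ?gt_eqF // mulr1.
Qed.


Lemma U_setT (l : R) (hl : l < 1) :
  (uniform_prob hl : {measure set (measurableTypeR R) -> \bar R}) setT = 1%E.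
Proof. exact: (probability_setT (uniform_prob hl)). Qed.

Lemma U_setC (l : R) (hl : l < 1) (S : set (measurableTypeR R)) : measurable S ->
  uniform_prob hl (~` S) = (1 - uniform_prob hl S)%E.
Proof. move=> mS; exact: (probability_setC (uniform_prob hl) mS). Qed.

Lemma U_upper (l : R) (hl : l < 1) (l0 : l <= 0) (k r : R) (k0 : 0 < k) :
  (\int[uniform_prob hl]_u (if k * Num.max u 0 <= r then 1 else 0 : R)%:E <=
  (1 - (1 - Num.max r 0 / k) / (1 - l))%:E)%E.
Proof.
set t := Num.max r 0 / k.
have t0 : 0 <= t by rewrite divr_ge0 ?le_max ?lexx ?orbT // ltW.
have l1 : 0 < 1 - l by rewrite subr_gt0.
have mif : measurable_fun setT
    (fun u : measurableTypeR R => (if k * Num.max u 0 <= r then 1 else 0 : R)%:E).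
  apply: measurable_ifle => //.
  by apply: measurable_funM => //; exact: measurable_maxr.
have [t1|t1] := leP t 1; last first.
  apply: (@le_trans _ _ (\int[uniform_prob hl]_u (cst 1%:E) u)%E).
    apply: ge0_le_integral => //.
    - by move=> x _; rewrite lee_fin; case: ifP.
    - by move=> x _; rewrite lee_fin; case: ifP.
  rewrite integral_cst // U_setT mul1e lee_fin lerBrDr gerDl.
  by rewrite pmulr_lle0 ?invr_gt0 // subr_le0 ltW.
have -> : (1 - (1 - t) / (1 - l))%:E = uniform_prob hl (~` `]t, 1%R]%classic).
  rewrite U_setC // (@U_oc l t hl (le_trans l0 t0) t1).
  by rewrite -EFinD.
have -> : uniform_prob hl (~` `]t, 1%R]%classic) =
    (\int[uniform_prob hl]_u (\1_(~` `]t, 1%R]%classic) u)%:E)%E.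
  by rewrite integral_indic //= ?setIT //; exact: measurableC.
apply: ge0_le_integral => //.
- by move=> x _; rewrite lee_fin; case: ifP.
- apply/measurable_EFinP; apply: measurable_indic.
  exact: measurableC.
move=> u _; rewrite indicE.
case: (boolP (u \in ~` `]t, 1%R]%classic)) => [_|]; first by rewrite lee_fin; case: ifP.
rewrite in_setC negbK mem_setE /= in_itv /= => /andP[tu u1].
have u0 : 0 <= u by exact: le_trans (ltW tu).
rewrite (max_idPl u0).
suff -> : (k * u <= r) = false by [].
apply/negbTE; rewrite -ltNge.
apply: (@le_lt_trans _ _ (Num.max r 0)); first by rewrite le_max lexx.
have := ltr_pM2l k0 t u; rewrite tu => /esym.
by rewrite /t mulrCA mulfV ?gt_eqF // mulr1.
Qed.

End U.

Section Gen.
Context (R : realType).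

Lemma int_sumv d (X : measurableType d) (mu : {measure set X -> \bar R}) (n : nat)
  (v : 'I_n -> R) (g : 'I_n -> X -> R) :
  (forall c, 0 <= v c) -> (forall c x, 0 <= g c x) ->
  (forall c, measurable_fun setT (g c)) ->
  (\int[mu]_x (\sum_(c < n) v c * g c x)%:E =
   \sum_(c < n) (v c)%:E * \int[mu]_x (g c x)%:E)%E.
Proof.
move=> v0 g0 mg.
under eq_integral do rewrite -sumEFin.
rewrite ge0_integral_sum //; last 2 first.
- move=> c; apply/measurable_EFinP; exact: measurable_funM.
- by move=> c x _; rewrite lee_fin mulr_ge0.
apply: eq_bigr => c _.
under eq_integral do rewrite EFinM.
by rewrite ge0_integralZl_EFin //; [move=> x _; rewrite lee_fin|exact/measurable_EFinP].
Qed.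

End Gen.

Section S.
Context (R : realType) (C T : nat).
Local Notation A := (alloc R C T).

Definition coord (c : 'I_C) (t : 'I_T) (x : A) : R := tnth (tnth x c) t.

Lemma measurable_coord c t : measurable_fun setT (coord c t).
Proof.
rewrite /coord.
apply: (measurableT_comp (f := fun y : T.-tuple R => tnth y t) (g := fun x : A => tnth x c)).
  exact: measurable_tnth.
exact: measurable_tnth.
Qed.

Definition strat (Z : 'I_T -> R) (v : 'I_C -> R) (k : R) (u : R) : A :=
  [tuple [tuple Z t * (2 * v c * k) * Num.max u 0 | t < T] | c < C].

Lemma coord_strat Z v k u c t : coord c t (strat Z v k u) = Z t * (2 * v c * k) * Num.max u 0.
Proof. by rewrite /coord /strat !tnth_mktuple. Qed.

Lemma measurable_strat Z v k : measurable_fun (setT : set (measurableTypeR R)) (strat Z v k).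
Proof.
apply/measurable_fun_tnthP => c; apply/measurable_fun_tnthP => t.
rewrite /comp /=.
under eq_fun do rewrite !tnth_mktuple.
apply: measurable_realfun.measurable_funM => //.
exact: measurable_realfun.measurable_maxr.
Qed.

Definition strat_mfun Z v k : {mfun measurableTypeR R >-> A} :=
  HB.pack (strat Z v k) (isMeasurableFun.Build _ _ _ _ _ (measurable_strat Z v k)).

Definition strat_prob Z v k (l : R) (hl : l < 1) : probability A R :=
  distribution (uniform_prob hl) (strat_mfun Z v k).
Arguments strat_prob Z v k {l} hl.


Definition orth : set A := [set x | forall c t, 0 <= coord c t x].

Lemma measurable_orth : measurable orth.
Proof.
have -> : orth = \bigcap_(c in [set: 'I_C]) \bigcap_(t in [set: 'I_T])
    (coord c t @^-1` `[0, +oo[%classic).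
  apply/seteqP; split => x /=.
  - by move=> h c _ t _ /=; rewrite in_itv /= andbT; exact: h.
  - by move=> h c t; have := h c I t I; rewrite /= in_itv /= andbT.
apply: fin_bigcap_measurable; first exact: finite_finset.
move=> c _; apply: fin_bigcap_measurable; first exact: finite_finset.
move=> t _; rewrite -[X in measurable X]setTI.
exact: measurable_coord.
Qed.



Lemma int_orth (P : probability A R) (f g : A -> \bar R) :
  P orth = 1%E -> measurable_fun (setT : set A) f -> measurable_fun (setT : set A) g ->
  (forall x, orth x -> f x = g x) -> (\int[P]_x f x = \int[P]_x g x)%E.
Proof.
move=> PO mf mg fg; apply: ae_eq_integral => //.
exists (~` orth); split.
- exact: measurableC measurable_orth.
- have h := probability_setC P measurable_orth.
  by move: h; rewrite PO subee.
- by move=> x /= nfx; apply: contra_not nfx => ox _; exact: fg.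
Qed.


Definition eff (w : 'I_T -> R) (x : A) (c : 'I_C) : R := \sum_(t < T) w t * coord c t x.

Lemma measurable_eff w c : measurable_fun setT (fun x : A => eff w x c).
Proof.
rewrite /eff; apply: measurable_sum => t.
by apply: measurable_funM => //; exact: measurable_coord.
Qed.

Lemma W_WCE a b (x y : A) c :
  W_WC a b (tnth x c) (tnth y c) = if eff b y c <= eff a x c then 1 else 0.
Proof. by []. Qed.

Definition pay (v : 'I_C -> R) a b (x y : A) : R :=
  \sum_(c < C) v c * W_WC a b (tnth x c) (tnth y c).

Lemma measurable_pay v a b :
  measurable_fun setT (fun z : A * A => (pay v a b z.1 z.2)%:E).
Proof.
apply/measurable_EFinP; rewrite /pay; apply: measurable_sum => c.
apply: measurable_funM => //.
under eq_fun do rewrite W_WCE.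
apply: measurable_fun_ifT => //.
apply: measurable_fun_ler.
- exact: (measurableT_comp (measurable_eff b c) measurable_snd).
- exact: (measurableT_comp (measurable_eff a c) measurable_fst).
Qed.

Lemma measurable_pay1 v a b y :
  measurable_fun setT (fun x : A => (pay v a b x y)%:E).
Proof.
apply/measurable_EFinP; rewrite /pay; apply: measurable_sum => c.
apply: measurable_funM => //.
under eq_fun do rewrite W_WCE.
apply: measurable_fun_ifT => //.
apply: measurable_fun_ler => //; exact: measurable_eff.
Qed.

Lemma measurable_pay2 v a b x :
  measurable_fun setT (fun y : A => (pay v a b x y)%:E).
Proof.
apply/measurable_EFinP; rewrite /pay; apply: measurable_sum => c.
apply: measurable_funM => //.
under eq_fun do rewrite W_WCE.
apply: measurable_fun_ifT => //.
apply: measurable_fun_ler => //; exact: measurable_eff.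
Qed.

Lemma pay_ge0 v a b x y : (forall c, 0 <= v c) -> 0 <= pay v a b x y.
Proof.
move=> v0; apply: sumr_ge0 => c _; apply: mulr_ge0 => //.
by rewrite W_WCE; case: ifP.
Qed.

Lemma payoffX_pay v a b FX FY : (forall c, 0 <= v c) ->
  payoffX v a b FX FY = (\int[product_measure1 FX FY]_z (pay v a b z.1 z.2)%:E)%E.
Proof. by []. Qed.

Lemma eff_strat w Z v k u c :
  eff w (strat Z v k u) c = (\sum_(t < T) w t * Z t) * (2 * v c * k) * Num.max u 0.
Proof.
rewrite /eff !mulr_suml; apply: eq_bigr => t _.
by rewrite coord_strat !mulrA.
Qed.


Lemma int_strat Z v k l (hl : l < 1) (f : A -> \bar R) :
  measurable_fun setT f -> (forall x, (0 <= f x)%E) ->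
  (\int[strat_prob Z v k hl]_x f x = \int[uniform_prob hl]_u f (strat Z v k u))%E.
Proof. by move=> mf f0; rewrite ge0_integral_distribution. Qed.

Lemma strat_orth Z v k l (hl : l < 1) :
  (forall t, 0 <= Z t) -> (forall c, 0 <= v c) -> 0 <= k ->
  strat_prob Z v k hl orth = 1%E.
Proof.
move=> Z0 v0 k0.
rewrite /strat_prob /distribution /pushforward /=.
have -> : strat_mfun Z v k @^-1` orth = setT.
  apply/seteqP; split => u //= _ c t; rewrite coord_strat.
  rewrite mulr_ge0 ?le_max ?lexx ?orbT // mulr_ge0 // mulr_ge0 // mulr_ge0 //.
exact: U_setT.
Qed.

Lemma max0_ge0 (x : R) : 0 <= Num.max x 0.
Proof. by rewrite le_max lexx orbT. Qed.

Lemma strat_budget Z v k l (hl : l < 1) t :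
  (forall t, 0 <= Z t) -> (forall c, 0 <= v c) -> \sum_(c < C) v c = 1 ->
  0 <= k -> l <= 0 -> k / (1 - l) <= 1 ->
  (\int[strat_prob Z v k hl]_x (\sum_(c < C) coord c t x)%:E <= (Z t)%:E)%E.
Proof.
move=> Z0 v0 sv k0 l0 kl.
rewrite (@int_orth _ _ (fun x => (\sum_(c < C) Num.max (coord c t x) 0)%:E)); last 4 first.
- exact: strat_orth.
- apply/measurable_EFinP; apply: measurable_sum => c; exact: measurable_coord.
- apply/measurable_EFinP; apply: measurable_sum => c.
  by apply: measurable_maxr => //; exact: measurable_coord.
- by move=> x ox; congr EFin; apply: eq_bigr => c _; rewrite (max_idPl (ox c t)).
rewrite int_strat; last 2 first.
- apply/measurable_EFinP; apply: measurable_sum => c.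
  by apply: measurable_maxr => //; exact: measurable_coord.
- move=> x; rewrite lee_fin; apply: sumr_ge0 => c _.
by rewrite /Order.max; case: ifPn => //; rewrite -leNgt.
have m0 (u : R) : 0 <= Num.max u 0 by exact: max0_ge0.
under eq_integral => u _.
  rewrite (eq_bigr (fun c => (Z t * 2 * k * Num.max u 0) * v c)); last first.
    move=> c _; rewrite coord_strat (max_idPl _); first by ring.
    by rewrite mulr_ge0 // mulr_ge0 // mulr_ge0 // mulr_ge0.
  rewrite -mulr_sumr sv mulr1 EFinM.
  over.
rewrite /= ge0_integralZl_EFin //; last 3 first.
- by move=> x _; rewrite lee_fin.
- by apply/measurable_EFinP; exact: measurable_maxr.
- by rewrite mulr_ge0 // mulr_ge0.
rewrite U_maxr // -EFinM lee_fin.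
have -> : Z t * 2 * k * ((1 - l)^-1 / 2) = Z t * (k / (1 - l)).
  by field; rewrite subr_eq0 gt_eqF.
by rewrite ler_piMr.
Qed.


Lemma strat_lower Z v k l (hl : l < 1) a b (y : A) :
  (forall c, 0 < v c) -> \sum_(c < C) v c = 1 -> l <= 0 ->
  0 < (\sum_(t < T) a t * Z t) * 2 * k ->
  (((1 - l)^-1 * (1 - (\sum_(c < C) Num.max (eff b y c) 0) /
        ((\sum_(t < T) a t * Z t) * 2 * k)))%:E <=
   \int[strat_prob Z v k hl]_x (pay v a b x y)%:E)%E.
Proof.
move=> v0 sv l0 K0.
set P := \sum_(t < T) a t * Z t in K0 *.
rewrite int_strat; last 2 first.
- exact: measurable_pay1.
- by move=> x; rewrite lee_fin pay_ge0 // => c; exact: ltW.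
rewrite /pay.
under eq_integral => u _.
  under eq_bigr => c _ do rewrite W_WCE eff_strat.
  over.
rewrite /= int_sumv; last 3 first.
- by move=> c; exact: ltW.
- by move=> c u; case: ifP.
- move=> c; apply: measurable_fun_ifT => //; apply: measurable_fun_ler => //.
  by apply: measurable_funM => //; exact: measurable_maxr.
have P0 : P != 0.
  by apply: contraTneq K0 => ->; rewrite !mul0r ltxx.
have k0 : k != 0.
  by apply: contraTneq K0 => ->; rewrite mulr0 ltxx.
have Kc c : 0 < P * (2 * v c * k).
  have -> : P * (2 * v c * k) = v c * (P * 2 * k) by ring.
  exact: mulr_gt0.
have l1 : 1 - l != 0 by rewrite subr_eq0 gt_eqF.
apply: (@le_trans _ _ (\sum_(c < C) v c *
   ((1 - Num.max (eff b y c) 0 / (P * (2 * v c * k))) / (1 - l)))%:E); last first.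
  rewrite -sumEFin; apply: lee_sum => c _; rewrite EFinM.
  apply: lee_wpmul2l; first by rewrite lee_fin ltW.
  exact: U_lower.
rewrite lee_fin le_eqVlt; apply/orP; left; apply/eqP.
rewrite [RHS](eq_bigr (fun c => (1 - l)^-1 * (v c - Num.max (eff b y c) 0 / (P * 2 * k)))); last first.
  move=> c _; field.
  by rewrite P0 k0 l1 gt_eqF.
by rewrite -mulr_sumr sumrB -mulr_suml sv.
Qed.


Lemma strat_upper Z v k l (hl : l < 1) a b (x : A) :
  (forall c, 0 < v c) -> \sum_(c < C) v c = 1 -> l <= 0 ->
  0 < (\sum_(t < T) b t * Z t) * 2 * k ->
  (\int[strat_prob Z v k hl]_y (pay v a b x y)%:E <=
   (1 - (1 - l)^-1 * (1 - (\sum_(c < C) Num.max (eff a x c) 0) /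
        ((\sum_(t < T) b t * Z t) * 2 * k)))%:E)%E.
Proof.
move=> v0 sv l0 K0.
set P := \sum_(t < T) b t * Z t in K0 *.
rewrite int_strat; last 2 first.
- exact: measurable_pay2.
- by move=> y; rewrite lee_fin pay_ge0 // => c; exact: ltW.
rewrite /pay.
under eq_integral => u _.
  under eq_bigr => c _ do rewrite W_WCE eff_strat.
  over.
rewrite /= int_sumv; last 3 first.
- by move=> c; exact: ltW.
- by move=> c u; case: ifP.
- move=> c; apply: measurable_fun_ifT => //; apply: measurable_fun_ler => //.
  by apply: measurable_funM => //; exact: measurable_maxr.
have P0 : P != 0.
  by apply: contraTneq K0 => ->; rewrite !mul0r ltxx.
have k0 : k != 0.
  by apply: contraTneq K0 => ->; rewrite mulr0 ltxx.
have Kc c : 0 < P * (2 * v c * k).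
  have -> : P * (2 * v c * k) = v c * (P * 2 * k) by ring.
  exact: mulr_gt0.
have l1 : 1 - l != 0 by rewrite subr_eq0 gt_eqF.
apply: (@le_trans _ _ (\sum_(c < C) v c *
   (1 - (1 - Num.max (eff a x c) 0 / (P * (2 * v c * k))) / (1 - l)))%:E).
  rewrite -sumEFin; apply: lee_sum => c _; rewrite EFinM.
  apply: lee_wpmul2l; first by rewrite lee_fin ltW.
  exact: U_upper.
rewrite lee_fin le_eqVlt; apply/orP; left; apply/eqP.
rewrite [LHS](eq_bigr (fun c => v c - (1 - l)^-1 * (v c - Num.max (eff a x c) 0 / (P * 2 * k)))); last first.
  move=> c _; field.
  by rewrite P0 k0 l1 gt_eqF.
by rewrite sumrB -mulr_sumr sumrB -mulr_suml sv.
Qed.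


Lemma max_sum_le (w y : 'I_T -> R) : (forall t, 0 <= w t) ->
  Num.max (\sum_(t < T) w t * y t) 0 <= \sum_(t < T) w t * Num.max (y t) 0.
Proof.
move=> w0; rewrite ge_max; apply/andP; split.
- by apply: ler_sum => t _; apply: ler_wpM2l => //; rewrite le_max lexx.
- by apply: sumr_ge0 => t _; apply: mulr_ge0 => //; exact: max0_ge0.
Qed.

Lemma budget_eff (G : probability A R) (w Zb : 'I_T -> R) :
  (forall t, 0 <= w t) -> admissible Zb G ->
  (\int[G]_y (\sum_(c < C) Num.max (eff w y c) 0)%:E <=
   (\sum_(t < T) w t * Zb t)%:E)%E.
Proof.
move=> w0 [GO GB].
have mS t : measurable_fun setT (fun y : A => \sum_(c < C) Num.max (coord c t y) 0).
  by apply: measurable_sum => c; apply: measurable_maxr => //; exact: measurable_coord.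
apply: (@le_trans _ _ (\int[G]_y (\sum_(t < T) w t *
    (\sum_(c < C) Num.max (coord c t y) 0))%:E)%E).
  apply: ge0_le_integral => //.
  - by move=> y _; rewrite lee_fin; apply: sumr_ge0 => c _; exact: max0_ge0.
  - apply/measurable_EFinP; apply: measurable_sum => c.
    by apply: measurable_maxr => //; exact: measurable_eff.
  - apply/measurable_EFinP; apply: measurable_sum => t.
    exact: measurable_funM.
  move=> y _; rewrite lee_fin.
  under [leRHS]eq_bigr do rewrite mulr_sumr.
  rewrite exchange_big /=; apply: ler_sum => c _.
  exact: max_sum_le.
rewrite int_sumv //; last by move=> t y; apply: sumr_ge0 => c _; exact: max0_ge0.
rewrite -sumEFin; apply: lee_sum => t _.
rewrite EFinM; apply: lee_wpmul2l; first by rewrite lee_fin.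
rewrite -(@int_orth G (fun y => (\sum_(c < C) coord c t y)%:E)) //.
- exact: GB.
- apply/measurable_EFinP; apply: measurable_sum => c; exact: measurable_coord.
- by apply/measurable_EFinP.
- by move=> y oy; congr EFin; apply: eq_bigr => c _; rewrite (max_idPl (oy c t)).
Qed.


Lemma probT (G : probability A R) : (G : {measure set A -> \bar R}) setT = 1%E.
Proof. exact: probability_setT. Qed.

Lemma int_cstG (G : probability A R) (r : R) : (\int[G]_y (cst r%:E) y = r%:E)%E.
Proof. by rewrite integral_cst // probT mule1. Qed.

Lemma guarX v a b (FX G : probability A R) (c0 k0 B : R) :
  (forall c, 0 <= v c) -> 0 <= c0 -> 0 <= k0 ->
  (forall y, ((c0 - k0 * \sum_(c < C) Num.max (eff b y c) 0)%:E <=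
              \int[FX]_x (pay v a b x y)%:E)%E) ->
  (\int[G]_y (\sum_(c < C) Num.max (eff b y c) 0)%:E <= B%:E)%E ->
  ((c0 - k0 * B)%:E <= payoffX v a b FX G)%E.
Proof.
move=> v0 c00 k00 hy hB.
have mf := measurable_pay v a b.
have f0 : forall z : A * A, (0 <= (pay v a b z.1 z.2)%:E)%E.
  by move=> z; rewrite lee_fin pay_ge0.
have -> : payoffX v a b FX G =
    (\int[G]_y fubini_G FX (fun z : A * A => (pay v a b z.1 z.2)%:E) y)%E.
  exact: (fubini_tonelli2 _ mf f0).
have mphi := @measurable_fun_fubini_tonelli_G _ _ _ _ _ FX _ mf f0.
set phi := fubini_G FX _ in mphi *.
have phi0 y : (0 <= phi y)%E.
  by apply: integral_ge0 => x _; exact: f0.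
set S := fun y : A => (\sum_(c < C) Num.max (eff b y c) 0)%:E.
have mS : measurable_fun setT S.
  apply/measurable_EFinP; apply: measurable_sum => c.
  by apply: measurable_maxr => //; exact: measurable_eff.
have S0 y : (0 <= S y)%E.
  by rewrite lee_fin; apply: sumr_ge0 => c _; exact: max0_ge0.
have key : (c0%:E <= \int[G]_y phi y + k0%:E * \int[G]_y S y)%E.
  rewrite -ge0_integralZl_EFin // -ge0_integralD //; last 2 first.
  - by move=> y _; rewrite mule_ge0 // lee_fin.
  - exact: measurable_funeM.
  rewrite -(int_cstG G c0); apply: ge0_le_integral => //.
  - apply: emeasurable_funD => //; exact: measurable_funeM.
  move=> y _ /=; rewrite /phi /fubini_G /=.
  by have := hy y; rewrite EFinB leeBlDr // EFinM.
by rewrite EFinB leeBlDr // (le_trans key) // leeD2l // EFinM lee_wpmul2l // lee_fin.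
Qed.


Lemma guarY v a b (F GY : probability A R) (c0 k0 Aa : R) :
  (forall c, 0 <= v c) -> 0 <= c0 -> 0 <= k0 ->
  (forall x, (\int[GY]_y (pay v a b x y)%:E <=
              (c0 + k0 * \sum_(c < C) Num.max (eff a x c) 0)%:E)%E) ->
  (\int[F]_x (\sum_(c < C) Num.max (eff a x c) 0)%:E <= Aa%:E)%E ->
  (payoffX v a b F GY <= (c0 + k0 * Aa)%:E)%E.
Proof.
move=> v0 c00 k00 hx hA.
have mf := measurable_pay v a b.
have f0 : forall z : A * A, (0 <= (pay v a b z.1 z.2)%:E)%E.
  by move=> z; rewrite lee_fin pay_ge0.
have -> : payoffX v a b F GY =
    (\int[F]_x fubini_F GY (fun z : A * A => (pay v a b z.1 z.2)%:E) x)%E.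
  exact: (fubini_tonelli1 _ mf f0).
have mphi := @measurable_fun_fubini_tonelli_F _ _ _ _ _ GY _ mf f0.
set phi := fubini_F GY _ in mphi *.
set S := fun x : A => (\sum_(c < C) Num.max (eff a x c) 0)%:E.
have mS : measurable_fun setT S.
  apply/measurable_EFinP; apply: measurable_sum => c.
  by apply: measurable_maxr => //; exact: measurable_eff.
have S0 x : (0 <= S x)%E.
  by rewrite lee_fin; apply: sumr_ge0 => c _; exact: max0_ge0.
apply: (@le_trans _ _ (\int[F]_x (c0%:E + k0%:E * S x))%E).
  apply: ge0_le_integral => //.
  - by move=> x _; apply: integral_ge0 => y _; exact: f0.
  - apply: emeasurable_funD => //; exact: measurable_funeM.
  move=> x _ /=; rewrite /phi /fubini_F /=.
  by have := hx x; rewrite EFinD EFinM.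
rewrite ge0_integralD //; try by [move=> x _; rewrite lee_fin |
  move=> x _; rewrite mule_ge0 // lee_fin | exact: measurable_funeM].
rewrite (_ : (\int[F]_x c0%:E)%E = c0%:E); last exact: int_cstG.
rewrite ge0_integralZl_EFin //.
by rewrite EFinD leeD2l // EFinM lee_wpmul2l // lee_fin.
Qed.


Lemma Xguar v a b Z Yb k l (hl : l < 1) (G : probability A R) :
  (forall c, 0 < v c) -> \sum_(c < C) v c = 1 -> l <= 0 ->
  0 < (\sum_(t < T) a t * Z t) * 2 * k -> (forall t, 0 <= b t) -> admissible Yb G ->
  (((1 - l)^-1 - (1 - l)^-1 / ((\sum_(t < T) a t * Z t) * 2 * k) *
     (\sum_(t < T) b t * Yb t))%:E <= payoffX v a b (strat_prob Z v k hl) G)%E.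
Proof.
move=> v0 sv l0 K0 b0 adm.
have q0 : 0 <= (1 - l)^-1 by rewrite invr_ge0 subr_ge0 ltW.
apply: guarX => //.
- by move=> c; exact: ltW.
- by rewrite divr_ge0 // ltW.
- move=> y; apply: (le_trans _ (@strat_lower Z v k l hl a b y v0 sv l0 K0)).
  rewrite lee_fin le_eqVlt; apply/orP; left; apply/eqP.
  by ring.
- exact: budget_eff.
Qed.

Lemma Yguar v a b Z Xb k l (hl : l < 1) (F : probability A R) :
  (forall c, 0 < v c) -> \sum_(c < C) v c = 1 -> l <= 0 ->
  0 < (\sum_(t < T) b t * Z t) * 2 * k -> (forall t, 0 <= a t) -> admissible Xb F ->
  (payoffX v a b F (strat_prob Z v k hl) <=
   ((1 - (1 - l)^-1) + (1 - l)^-1 / ((\sum_(t < T) b t * Z t) * 2 * k) *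
     (\sum_(t < T) a t * Xb t))%:E)%E.
Proof.
move=> v0 sv l0 K0 a0 adm.
have q0 : 0 <= (1 - l)^-1 by rewrite invr_ge0 subr_ge0 ltW.
apply: guarY => //.
- by move=> c; exact: ltW.
- rewrite subr_ge0 invf_le1; last by rewrite subr_gt0.
  by rewrite lerDl oppr_ge0.
- by rewrite divr_ge0 // ltW.
- move=> x; apply: (le_trans (@strat_upper Z v k l hl a b x v0 sv l0 K0)).
  rewrite lee_fin le_eqVlt; apply/orP; left; apply/eqP.
  by ring.
- exact: budget_eff.
Qed.

Lemma Yguar1 v a b Xb (F G : probability A R) :
  (forall c, 0 < v c) -> \sum_(c < C) v c = 1 ->
  (forall t, 0 <= a t) -> admissible Xb F ->
  (payoffX v a b F G <= 1%:E)%E.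
Proof.
move=> v0 sv a0 adm.
have -> : (1%:E = (1 + 0 * \sum_(t < T) a t * Xb t)%:E)%E by rewrite mul0r addr0.
apply: guarY => //.
- by move=> c; exact: ltW.
- move=> x; rewrite mul0r addr0 -(int_cstG G 1).
  apply: ge0_le_integral => //.
  - by move=> y _; rewrite lee_fin pay_ge0 // => c; exact: ltW.
  - exact: measurable_pay2.
  move=> y _; rewrite lee_fin /pay -sv; apply: ler_sum => c _.
  by rewrite W_WCE; case: ifP => _; [rewrite mulr1|rewrite mulr0 ltW].
- exact: budget_eff.
Qed.


Lemma strat_adm Z v k l (hl : l < 1) :
  (forall t, 0 <= Z t) -> (forall c, 0 < v c) -> \sum_(c < C) v c = 1 ->
  0 <= k -> l <= 0 -> k / (1 - l) <= 1 -> admissible Z (strat_prob Z v k hl).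
Proof.
move=> Z0 v0 sv k0 l0 kl; split.
- by apply: strat_orth => // c; exact: ltW.
- move=> t; apply: strat_budget => // c; exact: ltW.
Qed.

Lemma core v a b Xb Yb (L : R) (FXs FYs : probability A R) :
  admissible Xb FXs -> admissible Yb FYs ->
  (forall G, admissible Yb G -> (L%:E <= payoffX v a b FXs G)%E) ->
  (forall F, admissible Xb F -> (payoffX v a b F FYs <= L%:E)%E) ->
  (exists FX FY : probability A R, equilibrium v a b Xb Yb FX FY) /\
  (forall FX FY : probability A R, equilibrium v a b Xb Yb FX FY ->
     payoffX v a b FX FY = L%:E /\ payoffY v a b FX FY = (1 - L)%:E).
Proof.
move=> aX aY hX hY.
have eqL : payoffX v a b FXs FYs = L%:E by apply/le_anti; rewrite hY // hX.
split.
- exists FXs, FYs; split => //.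
  + by move=> F aF; rewrite eqL; exact: hY.
  + by move=> G aG; rewrite eqL; exact: hX.
- move=> F G [aF aG hF hG].
  have e : payoffX v a b F G = L%:E.
    apply/le_anti/andP; split.
    * exact: le_trans (hG FYs aY) (hY F aF).
    * exact: le_trans (hX G aG) (hF FXs aX).
  by split => //; rewrite /payoffY e EFinB.
Qed.

End S.

Arguments strat_adm {R C T}.
Arguments strat_prob {R C T} Z v k {l} hl.
Arguments core {R C T}.
Arguments Xguar {R C T}.
Arguments Yguar {R C T}.
Arguments Yguar1 {R C T}.

Theorem proposition1 (R : realType) (C T : nat)
  (v : 'I_C -> R) (a b X Y : 'I_T -> R) :
  (forall c, 0 < v c) -> \sum_(c < C) v c = 1 ->
  (forall t, 0 <= a t) -> (forall t, 0 <= b t) ->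
  (forall t, 0 <= X t) -> (forall t, 0 <= Y t) ->
  0 < \sum_(t < T) a t * X t ->
  let beta := (\sum_(t < T) b t * Y t) / (\sum_(t < T) a t * X t) in
  (exists FX FY : probability (alloc R C T) R, equilibrium v a b X Y FX FY) /\
  (forall FX FY : probability (alloc R C T) R, equilibrium v a b X Y FX FY ->
     payoffX v a b FX FY = (Lpay beta)%:E /\
     payoffY v a b FX FY = (1 - Lpay beta)%:E).
Proof.
move=> v0 sv a0 b0 X0 Y0 A0 beta.
have B0 : 0 <= \sum_(t < T) b t * Y t by apply: sumr_ge0 => t _; exact: mulr_ge0.
rewrite /beta.
set Aa := \sum_(t < T) a t * X t in A0 *.
set Bb := \sum_(t < T) b t * Y t in B0 *.
have Aan : Aa != 0 by rewrite gt_eqF.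
have h01 : (0 : R) < 1 := ltr01.
have [BA|AB] := leP Bb Aa.
- have -> : Lpay (Bb / Aa) = 1 - Bb / (2 * Aa).
    have b1 : Bb / Aa <= 1 by rewrite ler_pdivrMr // mul1r.
    rewrite /Lpay b1.
    by field.
  pose FXs := strat_prob X v 1 h01.
  have aX : admissible X FXs.
    by apply: strat_adm => //; rewrite ?subr0 ?divr1 ?ler01.
  have hX : forall G, admissible Y G ->
      ((1 - Bb / (2 * Aa))%:E <= payoffX v a b FXs G)%E.
    move=> G aG.
    apply: (le_trans _ (Xguar v a b X Y 1 0 h01 G v0 sv (lexx 0) _ b0 aG)).
      rewrite lee_fin le_eqVlt; apply/orP; left; apply/eqP.
      rewrite subr0 invr1 -/Aa -/Bb; field.
      by rewrite Aan.
    by rewrite mulr1 mulr_gt0.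
  move: B0; rewrite le_eqVlt => /predU1P[B00|Bpos].
  + pose FYs := strat_prob Y v 0 h01.
    have aY : admissible Y FYs.
      by apply: strat_adm => //; rewrite ?subr0 ?divr1 ?mul0r ?ler01.
    apply: (core v a b X Y _ FXs FYs aX aY hX).
    move=> F aF; rewrite -B00 mul0r subr0.
    exact: (Yguar1 v a b X F FYs v0 sv a0 aF).
  + have Bn : Bb != 0 by rewrite gt_eqF.
    have hl : 1 - Aa / Bb < 1 by rewrite ltrBlDr ltrDl divr_gt0.
    pose FYs := strat_prob Y v (Aa / Bb) hl.
    have l0 : 1 - Aa / Bb <= 0 by rewrite subr_le0 ler_pdivlMr // mul1r.
    have aY : admissible Y FYs.
      apply: strat_adm => //; first by rewrite divr_ge0 // ltW.
      have -> : 1 - (1 - Aa / Bb) = Aa / Bb by rewrite opprB addrC subrK.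
      by rewrite divff // mulf_neq0 // invr_eq0.
    apply: (core v a b X Y _ FXs FYs aX aY hX).
    move=> F aF.
    have K0 : 0 < (\sum_(t < T) b t * Y t) * 2 * (Aa / Bb).
      by rewrite -/Bb; apply: mulr_gt0; [apply: mulr_gt0|apply: divr_gt0].
    apply: (le_trans (Yguar v a b Y X (Aa / Bb) _ hl F v0 sv l0 K0 a0 aF)).
    rewrite lee_fin le_eqVlt; apply/orP; left; apply/eqP.
    have e : 1 - (1 - Aa / Bb) = Aa / Bb by rewrite opprB addrC subrK.
    rewrite -/Aa -/Bb e; field.
    by rewrite Aan Bn.
- have Bpos : 0 < Bb by exact: lt_trans AB.
  have Bn : Bb != 0 by rewrite gt_eqF.
  have -> : Lpay (Bb / Aa) = Aa / (2 * Bb).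
    have b1 : (Bb / Aa <= 1) = false by rewrite ler_pdivrMr // mul1r leNgt AB.
    rewrite /Lpay b1.
    by field; rewrite Aan Bn.
  have hl : 1 - Bb / Aa < 1 by rewrite ltrBlDr ltrDl divr_gt0.
  have l0 : 1 - Bb / Aa <= 0 by rewrite subr_le0 ler_pdivlMr // mul1r ltW.
  pose FXs := strat_prob X v (Bb / Aa) hl.
  have aX : admissible X FXs.
    apply: strat_adm => //; first by rewrite divr_ge0 // ltW.
    have -> : 1 - (1 - Bb / Aa) = Bb / Aa by rewrite opprB addrC subrK.
    by rewrite divff // mulf_neq0 // invr_eq0.
  pose FYs := strat_prob Y v 1 h01.
  have aY : admissible Y FYs.
    by apply: strat_adm => //; rewrite ?subr0 ?divr1 ?ler01.
  apply: (core v a b X Y _ FXs FYs aX aY).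
  + move=> G aG.
    have K0 : 0 < (\sum_(t < T) a t * X t) * 2 * (Bb / Aa).
      by rewrite -/Aa; apply: mulr_gt0; [apply: mulr_gt0|apply: divr_gt0].
    apply: (le_trans _ (Xguar v a b X Y (Bb / Aa) _ hl G v0 sv l0 K0 b0 aG)).
    rewrite lee_fin le_eqVlt; apply/orP; left; apply/eqP.
    have e : 1 - (1 - Bb / Aa) = Bb / Aa by rewrite opprB addrC subrK.
    rewrite -/Aa -/Bb e; field.
    by rewrite Aan Bn.
  + move=> F aF.
    have K0 : 0 < (\sum_(t < T) b t * Y t) * 2 * 1.
      by rewrite -/Bb mulr1 mulr_gt0.
    apply: (le_trans (Yguar v a b Y X 1 0 h01 F v0 sv (lexx 0) K0 a0 aF)).
    rewrite lee_fin le_eqVlt; apply/orP; left; apply/eqP.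
    rewrite subr0 invr1 -/Aa -/Bb subrr add0r; field.
    by rewrite Bn.
Qed.
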